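(* Let $d\ge2$, let $a$ be an i.i.d. conductivity function on $\mathbb{Z}^d$, $T>0$, $\xi\in\mathbb{R}^d$ with $|\xi|=1$, and let $G_T$ and $\phi_T$ be the associated Green's function and approximate corrector. Then for every edge $e=[z,z+e_i]$ and every $x\in\mathbb{Z}^d$, \[ \frac{\partial\phi_T(x;a)}{\partial a(e)}=-\big(\nabla_i\phi_T(z;a)+\xi_i\big)\nabla_{z_i}G_T(z,x;a), \] and for all $n\in\mathbb{N}$, \[ \sup_{a(e)}\Big|\frac{\partial}{\partial a(e)}\big[\phi_T(x;a)^{n+1}\big]\Big|\lesssim|\phi_T(x;a)|^n\big(|\nabla_i\phi_T(z;a)|+1\big)|\nabla_{z_i}G_T(z,x;a)|+\big(|\nabla_i\phi_T(z;a)|+1\big)^{n+1}|\nabla_{z_i}G_T(z,x;a)|^{n+1}. \] In addition, \[ \sup_{a(e)}|\nabla_i\phi_T(z;a)|\lesssim|\nabla_i\phi_T(z;a)|+1. \] The multiplicative constant in the second estimate depends on $n$ in addition to $\alpha,\beta,d$.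
   Context: A conductivity function on $\mathbb{Z}^d$ is $a:\mathbb{Z}^d\times\mathbb{Z}^d\to\mathbb{R}^+$ with $a(x,y)=0$ if $|x-y|\ne1$ and $a(x,y)=a(y,x)\in[\alpha,\beta]$ if $|x-y|=1$, $0<\alpha\le\beta$; $a(e)$ denotes its value on the edge $e$; i.i.d. means the edge values are independent identically distributed. With $e_1,\dots,e_d$ the canonical basis: $\nabla u(x)=(u(x+e_i)-u(x))_i$, $\nabla^*u(x)=(u(x)-u(x-e_i))_i$, $\nabla^*\cdot g=\sum_i\nabla^*_ig_i$, $A(x)=\operatorname{diag}(a(x,x+e_1),\dots,a(x,x+e_d))$. The Green's function $G_T(\cdot,y;a)$ is the unique solution in $L^2(\mathbb{Z}^d)$ of $\sum_xT^{-1}G_T(x,y)v(x)+\sum_x\nabla v(x)\cdot A(x)\nabla_xG_T(x,y)=v(y)$ for all $v\in L^2(\mathbb{Z}^d)$; $\nabla_{z_i}G_T(z,x)=G_T(z+e_i,x)-G_T(z,x)$. The approximate corrector $\phi_T$ is the unique stationary random function with $T^{-1}\phi_T-\nabla^*\cdot A(\nabla\phi_T+\xi)=0$ and $\langle\phi_T\rangle=0$. $\sup_{a(e)}$ is the supremum over the value $a(e)\in[\alpha,\beta]$ with all other coefficients fixed. $X\lesssim Y$ means $X\le CY$ with $C$ depending only on $d,\alpha,\beta$ (unless stated otherwise). *)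

(* Defs.v *)
From Stdlib Require Import Reals Lra Lia ZArith List.
From Coquelicot Require Import Coquelicot.
Import ListNotations.
Open Scope R_scope.

(* Points of Z^d are lists of integers of length d; coordinate k is nth k x 0. *)
Definition pt := list Z.
Definition lattice (d : nat) (x : pt) : Prop := length x = d.

Fixpoint addto (x : pt) (i : nat) (c : Z) : pt :=
  match x, i with
  | [], _ => []
  | h :: t, O => (h + c)%Z :: t
  | h :: t, S i' => h :: addto t i' c
  end.
Definition shift (x : pt) (i : nat) : pt := addto x i 1%Z.
Definition unshift (x : pt) (i : nat) : pt := addto x i (-1)%Z.

Definition sumd (d : nat) (f : nat -> R) : R :=
  fold_right (fun i acc => f i + acc) 0 (seq 0 d).

Definition dist2 (d : nat) (x y : pt) : Z :=
  fold_right (fun k acc => ((nth k x 0%Z - nth k y 0%Z) ^ 2 + acc)%Z) 0%Z (seq 0 d).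

Definition Cond := pt -> pt -> R.
Definition conductivity (d : nat) (alpha beta : R) (a : Cond) : Prop :=
  forall x y, lattice d x -> lattice d y ->
    (dist2 d x y <> 1%Z -> a x y = 0) /\
    (dist2 d x y = 1%Z -> a x y = a y x /\ alpha <= a x y <= beta).

Definition elliptic (d : nat) (a : Cond) : Prop :=
  exists alpha beta, 0 < alpha <= beta /\ conductivity d alpha beta a.

(* the conductivity obtained from a by setting a(e) := s on e = [z, z+e_i] *)
Definition upd (a : Cond) (z : pt) (i : nat) (s : R) : Cond :=
  fun x y =>
    if list_eq_dec Z.eq_dec x z then
      (if list_eq_dec Z.eq_dec y (shift z i) then s else a x y)
    else if list_eq_dec Z.eq_dec x (shift z i) then
      (if list_eq_dec Z.eq_dec y z then s else a x y)
    else a x y.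

Definition grad (u : pt -> R) (x : pt) (i : nat) : R := u (shift x i) - u x.

Definition unit_vec (d : nat) (xi : nat -> R) : Prop := sumd d (fun i => xi i ^ 2) = 1.

Definition zrange (N : nat) : list Z :=
  map (fun k => (Z.of_nat k - Z.of_nat N)%Z) (seq 0 (2 * N + 1)).
Fixpoint box (d N : nat) : list pt :=
  match d with
  | O => [[]]
  | S d' => flat_map (fun j => map (cons j) (box d' N)) (zrange N)
  end.
Definition boxsum (d N : nat) (f : pt -> R) : R :=
  fold_right (fun x acc => f x + acc) 0 (box d N).

Definition l2 (d : nat) (v : pt -> R) : Prop :=
  exists M, forall N, boxsum d N (fun x => v x ^ 2) <= M.

(* G is the Green's function G_T(.,.;a): for every y, G(.,y) is in L^2(Z^d) and
   sum_x T^-1 G(x,y) v(x) + sum_x nabla v(x) . A(x) nabla_x G(x,y) = v(y)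
   for all v in L^2(Z^d) (the sums over Z^d are taken as limits over boxes). *)
Definition green (d : nat) (T : R) (a : Cond) (G : pt -> pt -> R) : Prop :=
  forall y, lattice d y ->
    l2 d (fun x => G x y) /\
    forall v, l2 d v ->
      is_lim_seq
        (fun N => boxsum d N (fun x =>
            / T * G x y * v x
            + sumd d (fun i => grad v x i * a x (shift x i) * grad (fun w => G w y) x i)))
        (Finite (v y)).

(* phi is the approximate corrector phi_T(.;a): the bounded solution on Z^d of
   T^-1 phi - nabla^* . A (nabla phi + xi) = 0. *)
Definition corrector (d : nat) (T : R) (xi : nat -> R) (a : Cond) (phi : pt -> R) : Prop :=
  (exists M, forall x, lattice d x -> Rabs (phi x) <= M) /\
  forall x, lattice d x ->
    / T * phi x
    - sumd d (fun i =>
        a x (shift x i) * (grad phi x i + xi i)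
        - a (unshift x i) x * (grad phi (unshift x i) i + xi i)) = 0.

(* Main.v *)
Require Import Defs.
From Stdlib Require Import Reals List Lra Lia ZArith.
From Coquelicot Require Import Coquelicot.
Require Import Defs.
Import ListNotations.
Open Scope R_scope.

Lemma addto_length : forall x j c, length (addto x j c) = length x.
Proof. induction x; intros [|j] c; simpl; auto. Qed.

Lemma nth_addto : forall x j c k, (j < length x)%nat ->
  nth k (addto x j c) 0%Z = (nth k x 0 + if Nat.eqb k j then c else 0)%Z.
Proof.
  induction x as [|h t IH]; intros j c k Hj; simpl in *; [lia|].
  destruct j as [|j]; destruct k as [|k]; simpl; try lia.
  apply IH; lia.
Qed.

Lemma addto_addto : forall x j c c', addto (addto x j c) j c' = addto x j (c + c').
Proof. induction x; intros [|j] c c'; simpl; f_equal; auto; lia. Qed.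

Lemma addto_0 : forall x j, addto x j 0 = x.
Proof. induction x; intros [|j]; simpl; f_equal; auto; lia. Qed.

Lemma shift_unshift : forall x j, shift (unshift x j) j = x.
Proof. intros. unfold shift, unshift. rewrite addto_addto. apply addto_0. Qed.
Lemma unshift_shift : forall x j, unshift (shift x j) j = x.
Proof. intros. unfold shift, unshift. rewrite addto_addto. apply addto_0. Qed.

Lemma lattice_shift : forall d x j, lattice d x -> lattice d (shift x j).
Proof. unfold lattice, shift; intros; rewrite addto_length; auto. Qed.
Lemma lattice_unshift : forall d x j, lattice d x -> lattice d (unshift x j).
Proof. unfold lattice, unshift; intros; rewrite addto_length; auto. Qed.

Lemma coord : forall (x y : pt) k, x = y -> nth k x 0%Z = nth k y 0%Z.
Proof. intros; subst; auto. Qed.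

Ltac lenlat := unfold lattice, shift, unshift in *; repeat rewrite addto_length; lia.

Ltac coordH H k :=
  let Hk := fresh "Hk" in
  pose proof (coord _ _ k H) as Hk; unfold shift, unshift in Hk;
  repeat (rewrite nth_addto in Hk by (repeat rewrite addto_length; unfold lattice in *; lia)).

Ltac coord_solve H i j :=
  coordH H i; coordH H j;
  repeat match goal with
  | Hx : context [Nat.eqb ?a ?b] |- _ =>
      let E := fresh in destruct (Nat.eqb a b) eqn:E;
      [apply Nat.eqb_eq in E | apply Nat.eqb_neq in E]
  end; lia.

Section Coords.
Variable d : nat.
Variable z : pt.
Hypothesis Hz : lattice d z.
Variables i j : nat.
Hypothesis Hi : (i < d)%nat.
Hypothesis Hj : (j < d)%nat.

Lemma L_ss : shift z j = shift z i -> j = i.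
Proof. intro H. coord_solve H i j. Qed.
Lemma L_s_ne : shift z i <> z.
Proof. intro H. coord_solve H i j. Qed.
Lemma L_u_ne : unshift z j <> z.
Proof. intro H. coord_solve H i j. Qed.
Lemma L_uz_s : unshift z j <> shift z i.
Proof. intro H. coord_solve H i j. Qed.
Lemma L_ss_z : shift (shift z i) j <> z.
Proof. intro H. coord_solve H i j. Qed.
Lemma L_ssi : shift (shift z i) j <> shift z i.
Proof. intro H. coord_solve H i j. Qed.
Lemma L_us : unshift (shift z i) j = z -> j = i.
Proof. intro H. coord_solve H i j. Qed.
Lemma L_us2 : unshift (shift z i) j <> shift z i.
Proof. intro H. coord_solve H i j. Qed.
End Coords.

Lemma zfold_ind : forall (f : nat -> Z) j n s,
  (forall k, f k = if Nat.eqb k j then 1%Z else 0%Z) ->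
  (s <= j < s + n)%nat ->
  fold_right (fun k acc => (f k + acc)%Z) 0%Z (seq s n) = 1%Z.
Proof.
  intros f j n. induction n as [|n IH]; intros s Hf Hr; [lia|].
  simpl. rewrite Hf. destruct (Nat.eqb s j) eqn:E.
  - apply Nat.eqb_eq in E. subst.
    assert (forall m t, (j < t)%nat -> fold_right (fun k acc => (f k + acc)%Z) 0%Z (seq t m) = 0%Z) as Z0.
    { induction m; intros t Ht; simpl; auto. rewrite Hf. destruct (Nat.eqb t j) eqn:E2.
      apply Nat.eqb_eq in E2; lia. rewrite IHm by lia. lia. }
    rewrite Z0 by lia. lia.
  - apply Nat.eqb_neq in E. rewrite IH; auto; lia.
Qed.

Lemma dist2_shift : forall d w j, lattice d w -> (j < d)%nat -> dist2 d w (shift w j) = 1%Z.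
Proof.
  intros d w j Hw Hj. unfold dist2.
  apply (zfold_ind _ j); [|lia].
  intro k. unfold shift. rewrite nth_addto by (unfold lattice in Hw; lia).
  destruct (Nat.eqb k j); lia.
Qed.
Lemma dist2_shift' : forall d w j, lattice d w -> (j < d)%nat -> dist2 d (shift w j) w = 1%Z.
Proof.
  intros d w j Hw Hj. unfold dist2.
  apply (zfold_ind _ j); [|lia].
  intro k. unfold shift. rewrite nth_addto by (unfold lattice in Hw; lia).
  destruct (Nat.eqb k j); lia.
Qed.

Lemma cond_edge : forall d al be a x j, conductivity d al be a -> lattice d x -> (j < d)%nat ->
  al <= a x (shift x j) <= be /\ a (shift x j) x = a x (shift x j).
Proof.
  intros d al be a x j Hc Hx Hj.
  destruct (Hc x (shift x j) Hx (lattice_shift _ _ _ Hx)) as [_ H2].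
  destruct (H2 (dist2_shift _ _ _ Hx Hj)) as [E B]. split; auto.
Qed.
Lemma cond_edge' : forall d al be a x j, conductivity d al be a -> lattice d x -> (j < d)%nat ->
  al <= a (unshift x j) x <= be.
Proof.
  intros. pose proof (cond_edge d al be a (unshift x j) j H (lattice_unshift _ _ _ H0) H1) as [B _].
  rewrite shift_unshift in B. auto.
Qed.

From Stdlib Require Import FunctionalExtensionality.

Lemma upd_at : forall a z i t, upd a z i t z (shift z i) = t.
Proof. intros. unfold upd. destruct (list_eq_dec Z.eq_dec z z); [|congruence].
  destruct (list_eq_dec Z.eq_dec (shift z i) (shift z i)); congruence. Qed.

Lemma upd_upd : forall a z i s t, upd (upd a z i s) z i t = upd a z i t.
Proof.
  intros. extensionality x. extensionality y. unfold upd.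
  repeat (destruct (list_eq_dec Z.eq_dec _ _)); subst; try congruence.
Qed.

Lemma upd_id : forall d al be a z i, conductivity d al be a -> lattice d z -> (i < d)%nat ->
  upd a z i (a z (shift z i)) = a.
Proof.
  intros d al be a z i Hc Hz Hi. extensionality x. extensionality y. unfold upd.
  pose proof (cond_edge d al be a z i Hc Hz Hi) as [_ E].
  repeat (destruct (list_eq_dec Z.eq_dec _ _)); subst; try congruence.
Qed.

Lemma upd_cond : forall d al be a z i t, conductivity d al be a -> lattice d z -> (i < d)%nat ->
  conductivity d (Rmin al t) (Rmax be t) (upd a z i t).
Proof.
  intros d al be a z i t Hc Hz Hi x y Hx Hy.
  pose proof (dist2_shift d z i Hz Hi) as D1.
  pose proof (dist2_shift' d z i Hz Hi) as D2.
  pose proof (L_s_ne d z Hz i i Hi Hi) as NE.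
  destruct (Hc x y Hx Hy) as [H1 H2].
  assert (Rmin al t <= t <= Rmax be t) by (split; [apply Rmin_r | apply Rmax_r]).
  assert (forall v, al <= v <= be -> Rmin al t <= v <= Rmax be t).
  { intros v Hv. split. eapply Rle_trans; [apply Rmin_l|lra]. eapply Rle_trans; [|apply Rmax_l]; lra. }
  split; intro Hd; unfold upd;
  repeat (destruct (list_eq_dec Z.eq_dec _ _)); subst; try congruence; try tauto;
  try (destruct (H2 Hd); split; auto; fail).
Qed.

Definition lsum {A} (l : list A) (f : A -> R) : R := fold_right (fun x acc => f x + acc) 0 l.

Lemma sumd_lsum : forall d f, sumd d f = lsum (seq 0 d) f.
Proof. reflexivity. Qed.
Lemma boxsum_lsum : forall d N f, boxsum d N f = lsum (box d N) f.
Proof. reflexivity. Qed.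

Section LS.
Context {A : Type}.
Implicit Types (l : list A) (f g : A -> R).

Lemma lsum_nil : forall f, lsum [] f = 0. Proof. reflexivity. Qed.
Lemma lsum_cons : forall a l f, lsum (a :: l) f = f a + lsum l f. Proof. reflexivity. Qed.
Lemma lsum_ext_in : forall l f g, (forall x, In x l -> f x = g x) -> lsum l f = lsum l g.
Proof. induction l as [|a l IHl]; intros f g H; simpl; auto. rewrite (H a) by (left; auto).
  rewrite (IHl f g); auto. intros; apply H; right; auto. Qed.
Lemma lsum_plus : forall l f g, lsum l (fun x => f x + g x) = lsum l f + lsum l g.
Proof. induction l; intros; simpl; [lra|]. rewrite IHl; lra. Qed.
Lemma lsum_minus : forall l f g, lsum l (fun x => f x - g x) = lsum l f - lsum l g.
Proof. induction l; intros; simpl; [lra|]. rewrite IHl; lra. Qed.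
Lemma lsum_scal : forall l c f, lsum l (fun x => c * f x) = c * lsum l f.
Proof. induction l; intros; simpl; [lra|]. rewrite IHl; lra. Qed.
Lemma lsum_zero : forall l, lsum l (fun _ => 0) = 0.
Proof. induction l; simpl; auto. rewrite IHl; lra. Qed.
Lemma lsum_nonneg : forall l f, (forall x, In x l -> 0 <= f x) -> 0 <= lsum l f.
Proof. induction l; intros; simpl; [lra|]. pose proof (H a (or_introl eq_refl)).
  pose proof (IHl f (fun x Hx => H x (or_intror Hx))). lra. Qed.
Lemma lsum_le : forall l f g, (forall x, In x l -> f x <= g x) -> lsum l f <= lsum l g.
Proof. induction l; intros; simpl; [lra|]. pose proof (H a (or_introl eq_refl)).
  pose proof (IHl f g (fun x Hx => H x (or_intror Hx))). lra. Qed.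
Lemma lsum_ge_term : forall l f p, (forall x, In x l -> 0 <= f x) -> In p l -> f p <= lsum l f.
Proof. induction l; intros f p H Hp; simpl in *; [tauto|].
  destruct Hp as [<-|Hp].
  - pose proof (lsum_nonneg l f (fun x Hx => H x (or_intror Hx))). lra.
  - pose proof (H a (or_introl eq_refl)). pose proof (IHl f p (fun x Hx => H x (or_intror Hx)) Hp). lra.
Qed.
Lemma lsum_abs : forall l f, Rabs (lsum l f) <= lsum l (fun x => Rabs (f x)).
Proof. induction l; intros; simpl. rewrite Rabs_R0; lra.
  eapply Rle_trans; [apply Rabs_triang|]. pose proof (IHl f). lra. Qed.
Lemma lsum_const : forall l c, lsum l (fun _ => c) = INR (length l) * c.
Proof. induction l; intros; simpl; [lra|]. rewrite IHl. destruct (length l); simpl; lra. Qed.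



Variable dec : forall x y : A, {x = y} + {x <> y}.
Lemma lsum_ind0 : forall l p v, ~ In p l -> lsum l (fun x => if dec x p then v else 0) = 0.
Proof. induction l; intros; simpl; auto. destruct (dec a p). subst; simpl in H; tauto.
  rewrite IHl; [lra|]. intro; apply H; right; auto. Qed.
Lemma lsum_ind : forall l p v, NoDup l -> In p l -> lsum l (fun x => if dec x p then v else 0) = v.
Proof. induction l; intros p v Hn Hp; simpl in *; [tauto|]. inversion Hn; subst.
  destruct (dec a p). subst. rewrite lsum_ind0; auto; lra.
  destruct Hp; [congruence|]. rewrite IHl; auto; lra. Qed.
Lemma lsum_ind_le : forall l p, NoDup l -> lsum l (fun x => if dec x p then 1 else 0) <= 1.
Proof. intros. destruct (in_dec dec p l). rewrite lsum_ind; auto; lra. rewrite lsum_ind0; auto; lra. Qed.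
End LS.
Lemma lsum_swap : forall {A B : Type} (l : list A) (mm : list B) (F : A -> B -> R),
  lsum l (fun x => lsum mm (fun y => F x y)) = lsum mm (fun y => lsum l (fun x => F x y)).
Proof. induction l; intros; rewrite ?lsum_nil, ?lsum_cons. rewrite (lsum_ext_in mm _ (fun _ => 0)) by (intros; rewrite lsum_nil; auto). rewrite lsum_zero; auto.
  rewrite IHl. rewrite (lsum_ext_in mm (fun y => lsum (a :: l) (fun x => F x y)) (fun y => F a y + lsum l (fun x => F x y))) by (intros; rewrite lsum_cons; auto). rewrite <- lsum_plus. reflexivity. Qed.


Lemma sumd_single : forall d i v, (i < d)%nat -> sumd d (fun k => if Nat.eq_dec k i then v else 0) = v.
Proof. intros. rewrite sumd_lsum. apply lsum_ind. apply seq_NoDup. apply in_seq. lia. Qed.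
Lemma sumd_ge_term : forall d f i, (forall k, (k < d)%nat -> 0 <= f k) -> (i < d)%nat -> f i <= sumd d f.
Proof. intros. rewrite sumd_lsum. apply lsum_ge_term; [|apply in_seq; lia].
  intros x Hx; apply in_seq in Hx; apply H; lia. Qed.
Lemma sumd_ext : forall d f g, (forall k, (k < d)%nat -> f k = g k) -> sumd d f = sumd d g.
Proof. intros. rewrite !sumd_lsum. apply lsum_ext_in. intros x Hx; apply in_seq in Hx; apply H; lia. Qed.
Lemma sumd_le : forall d f g, (forall k, (k < d)%nat -> f k <= g k) -> sumd d f <= sumd d g.
Proof. intros. rewrite !sumd_lsum. apply lsum_le. intros x Hx; apply in_seq in Hx; apply H; lia. Qed.

Lemma box_lattice : forall d N x, In x (box d N) -> lattice d x.
Proof.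
  unfold lattice. induction d; intros N x H; simpl in H.
  - destruct H as [<-|[]]; auto.
  - apply in_flat_map in H. destruct H as [j [_ Hj]]. apply in_map_iff in Hj.
    destruct Hj as [y [<- Hy]]. simpl. rewrite (IHd N y Hy). auto.
Qed.

Lemma zrange_in : forall N c, (Z.abs c <= Z.of_nat N)%Z -> In c (zrange N).
Proof.
  intros. unfold zrange. apply in_map_iff. exists (Z.to_nat (c + Z.of_nat N)).
  split. lia. apply in_seq. lia.
Qed.

Lemma box_in : forall d N x, length x = d -> List.Forall (fun c => (Z.abs c <= Z.of_nat N)%Z) x -> In x (box d N).
Proof.
  induction d; intros N x Hl HF; destruct x as [|c x]; simpl in *; try lia.
  - left; auto.
  - inversion HF; subst. apply in_flat_map. exists c. split. apply zrange_in; auto.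
    apply in_map. apply IHd; auto.
Qed.

Lemma zrange_nodup : forall N, NoDup (zrange N).
Proof.
  intros. unfold zrange. apply NoDup_map_NoDup_ForallPairs; [|apply seq_NoDup].
  intros a b _ _ H. lia.
Qed.

Lemma box_nodup : forall d N, NoDup (box d N).
Proof.
  induction d; intros N; simpl. constructor; [simpl; tauto| constructor].
  pose proof (zrange_nodup N) as HZ. generalize (zrange N) HZ. intro l.
  induction l as [|j l IHl]; intro Hn; simpl. constructor.
  inversion Hn; subst. apply NoDup_app.
  - apply NoDup_map_NoDup_ForallPairs; [|apply IHd]. intros a b _ _ H; inversion H; auto.
  - apply IHl; auto.
  - intros x Hx Hx2. apply in_map_iff in Hx. destruct Hx as [y [<- _]].
    apply in_flat_map in Hx2. destruct Hx2 as [j' [Hj' Hy]]. apply in_map_iff in Hy.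
    destruct Hy as [y' [E _]]. inversion E; subst. tauto.
Qed.

Definition bnd (x : pt) : Z := fold_right (fun c m => (Z.abs c + m)%Z) 0%Z x.

Lemma bnd_forall : forall x, List.Forall (fun c => (Z.abs c <= bnd x)%Z) x.
Proof.
  induction x; simpl; constructor. assert (0 <= bnd x)%Z.
  { clear IHx. induction x; simpl; lia. } lia.
  eapply Forall_impl; [|apply IHx]. intros c H; simpl in H. lia.
Qed.

Lemma Forall_addto : forall x j c0 M, List.Forall (fun c => (Z.abs c <= M)%Z) x ->
  List.Forall (fun c => (Z.abs c <= M + Z.abs c0)%Z) (addto x j c0).
Proof.
  induction x; intros j c0 M H; simpl. constructor.
  inversion H; subst. destruct j; constructor; try lia.
  eapply Forall_impl; [|apply H3]. intros; simpl in *; lia.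
  apply IHx; auto.
Qed.

Lemma box_big : forall d x, lattice d x -> forall N, (Z.to_nat (bnd x) + 1 <= N)%nat ->
  In x (box d N) /\ forall j, In (unshift x j) (box d N).
Proof.
  intros d x Hx N HN. split.
  - apply box_in; auto. eapply Forall_impl; [|apply bnd_forall]. intros; simpl in *; lia.
  - intro j. apply box_in. unfold unshift; rewrite addto_length; auto.
    eapply Forall_impl; [|apply (Forall_addto x j (-1)%Z (bnd x) (bnd_forall x))]. intros; simpl in *; lia.
Qed.

Definition Lx d (b : Cond) (xi : nat -> R) (u : pt -> R) (x : pt) : R :=
  sumd d (fun j => b x (shift x j) * (grad u x j + xi j) - b (unshift x j) x * (grad u (unshift x j) j + xi j)).
Definition xi0 : nat -> R := fun _ => 0.
Definition delta (p : pt) : pt -> R := fun w => if list_eq_dec Z.eq_dec w p then 1 else 0.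

Lemma lsum_delta : forall l p c, NoDup l -> In p l -> lsum l (fun w => delta p w * c) = c.
Proof.
  intros. rewrite (lsum_ext_in l _ (fun w => if list_eq_dec Z.eq_dec w p then c else 0)).
  apply lsum_ind; auto. intros; unfold delta; destruct (list_eq_dec Z.eq_dec x p); lra.
Qed.

Lemma l2_delta : forall d p, l2 d (delta p).
Proof.
  intros. exists 1. intro N. rewrite boxsum_lsum.
  rewrite (lsum_ext_in _ _ (fun w => if list_eq_dec Z.eq_dec w p then 1 else 0)).
  apply lsum_ind_le, box_nodup. intros; unfold delta; destruct (list_eq_dec Z.eq_dec x p); lra.
Qed.

Lemma lim_eventually : forall u l c N0, is_lim_seq u (Finite l) ->
  (forall N, (N0 <= N)%nat -> u N = c) -> c = l.
Proof.
  intros u l c N0 Hl He. apply is_lim_seq_incr_n with (N := N0) in Hl.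
  assert (is_lim_seq (fun n => u (n + N0)%nat) c).
  { apply is_lim_seq_ext with (fun _ => c). intro n. rewrite He; auto; lia. apply is_lim_seq_const. }
  pose proof (is_lim_seq_unique _ _ Hl). pose proof (is_lim_seq_unique _ _ H). rewrite H0 in H1.
  inversion H1; auto.
Qed.

Lemma lim_ge_eventually : forall u l c N0, is_lim_seq u (Finite l) ->
  (forall N, (N0 <= N)%nat -> c <= u N) -> c <= l.
Proof.
  intros u l c N0 Hl He. apply is_lim_seq_incr_n with (N := N0) in Hl.
  pose proof (is_lim_seq_le (fun _ => c) (fun n => u (n + N0)%nat) c l) as H.
  simpl in H. apply H; auto. intro; apply He; lia. apply is_lim_seq_const.
Qed.

Lemma green_pt : forall d T b G x y, green d T b G -> lattice d x -> lattice d y ->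
  / T * G x y - Lx d b xi0 (fun w => G w y) x = delta y x.
Proof.
  intros d T b G x y Hg Hx Hy.
  destruct (Hg y Hy) as [_ Hw]. specialize (Hw (delta x) (l2_delta d x)).
  set (Gy := fun w => G w y) in *.
  set (A := fun j => b x (shift x j) * (grad Gy x j + xi0 j)).
  set (B := fun j => b (unshift x j) x * (grad Gy (unshift x j) j + xi0 j)).
  assert (Hdx : delta x y = delta y x).
  { unfold delta. destruct (list_eq_dec Z.eq_dec y x), (list_eq_dec Z.eq_dec x y); subst; congruence. }
  rewrite <- Hdx. eapply lim_eventually; [exact Hw|].
  intros N HN. destruct (box_big d x Hx N HN) as [Hin Hin2].
  rewrite boxsum_lsum.
  rewrite (lsum_ext_in _ _ (fun w => delta x w * (/ T * G x y) +
        lsum (seq 0 d) (fun j => delta (unshift x j) w * B j - delta x w * A j))).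
  2:{ intros w Hwb. f_equal.
      - unfold delta. destruct (list_eq_dec Z.eq_dec w x); subst; [unfold Gy|]; lra.
      - rewrite sumd_lsum. apply lsum_ext_in. intros j Hj. apply in_seq in Hj. unfold A, B, delta, xi0.
        destruct (list_eq_dec Z.eq_dec (shift w j) x) as [E|E].
        + assert (Ew : w = unshift x j) by (rewrite <- E, unshift_shift; auto).
          destruct (list_eq_dec Z.eq_dec w (unshift x j)) as [_|C]; [|congruence].
          destruct (list_eq_dec Z.eq_dec w x) as [E2|E2].
          * exfalso. subst w. rewrite E2 in E. exact (L_s_ne d x Hx j j ltac:(lia) ltac:(lia) E).
          * subst w. unfold grad. rewrite shift_unshift. rewrite shift_unshift in *.
            destruct (list_eq_dec Z.eq_dec x x); [|congruence]. destruct (list_eq_dec Z.eq_dec (unshift x j) x); [congruence|]. ring.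
        + destruct (list_eq_dec Z.eq_dec w (unshift x j)) as [E3|E3].
          * exfalso. apply E. rewrite E3. apply shift_unshift.
          * unfold grad. destruct (list_eq_dec Z.eq_dec (shift w j) x); [congruence|].
            destruct (list_eq_dec Z.eq_dec w x) as [E2|E2]; [subst w|]; lra. }
  rewrite lsum_plus, lsum_swap. rewrite lsum_delta; auto using box_nodup.
  unfold Lx. rewrite !sumd_lsum.
  rewrite (lsum_ext_in (seq 0 d) _ (fun j => B j - A j)).
  2:{ intros j _. rewrite lsum_minus. rewrite !lsum_delta; auto using box_nodup. }
  rewrite !lsum_minus. fold A B. lra.
Qed.

Lemma lsum_scal_r : forall {A} (l : list A) c f, lsum l (fun x => f x * c) = lsum l f * c.
Proof. intros. rewrite (lsum_ext_in l _ (fun x => c * f x)) by (intros; ring). rewrite lsum_scal; ring. Qed.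

Lemma abs_le_sq : forall t, Rabs t <= 1 + t * (t * 1).
Proof. intro t. destruct (Rcase_abs t); [rewrite Rabs_left|rewrite Rabs_right]; nra. Qed.

Lemma green_bound : forall d T b G y, green d T b G -> lattice d y ->
  exists M, forall x, lattice d x -> Rabs (G x y) <= M.
Proof.
  intros d T b G y Hg Hy. destruct (Hg y Hy) as [[M0 HM] _]. exists (1 + M0).
  intros x Hx. destruct (box_big d x Hx (Z.to_nat (bnd x) + 1) (le_n _)) as [Hin _].
  specialize (HM (Z.to_nat (bnd x) + 1)%nat). rewrite boxsum_lsum in HM.
  pose proof (lsum_ge_term _ (fun x0 => G x0 y ^ 2) x (fun w _ => pow2_ge_0 (G w y)) Hin).
  cbv beta in *. assert (Rabs (G x y) <= 1 + G x y ^ 2).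
  { pose proof (abs_le_sq (G x y)). simpl. lra. }
  lra.
Qed.

Lemma green_sym : forall d T b G x y, green d T b G -> lattice d x -> lattice d y -> G x y = G y x.
Proof.
  intros d T b G x y Hg Hx Hy.
  destruct (Hg y Hy) as [Hly Hwy]. destruct (Hg x Hx) as [Hlx Hwx].
  specialize (Hwy _ Hlx). specialize (Hwx _ Hly).
  apply is_lim_seq_unique in Hwy. apply is_lim_seq_unique in Hwx.
  assert (Finite (G x y) = Finite (G y x)); [|congruence].
  rewrite <- Hwy, <- Hwx. apply Lim_seq_ext. intro N. rewrite !boxsum_lsum. apply lsum_ext_in.
  intros w _. f_equal. ring. apply sumd_ext. intros; ring.
Qed.

Lemma uniq_step : forall d al be b T w x K, 0 < T -> 0 < al -> conductivity d al be b ->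
  lattice d x -> (forall y, lattice d y -> Rabs (w y) <= K) ->
  / T * w x - Lx d b xi0 w x = 0 ->
  Rabs (w x) <= (INR d * (2 * be)) / (/ T + INR d * (2 * be)) * K.
Proof.
  intros d al be b T w x K HT Hal Hc Hx HK Heq.
  set (bp := fun j => b x (shift x j)). set (bm := fun j => b (unshift x j) x).
  set (S := sumd d (fun j => bp j + bm j)).
  set (Y := sumd d (fun j => bp j * w (shift x j) + bm j * w (unshift x j))).
  assert (HL : Lx d b xi0 w x = Y - S * w x).
  { unfold Lx, Y, S. rewrite !sumd_lsum. rewrite <- lsum_scal_r, <- lsum_minus.
    apply lsum_ext_in. intros j _. unfold grad, xi0, bp, bm. rewrite shift_unshift. ring. }
  assert (Hb : forall j, (j < d)%nat -> 0 <= bp j <= be /\ 0 <= bm j <= be).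
  { intros j Hj. pose proof (cond_edge d al be b x j Hc Hx Hj) as [B1 _].
    pose proof (cond_edge' d al be b x j Hc Hx Hj). unfold bp, bm; lra. }
  assert (HS : 0 <= S <= INR d * (2 * be)).
  { split. unfold S. rewrite sumd_lsum. apply lsum_nonneg. intros j Hj; apply in_seq in Hj.
    destruct (Hb j ltac:(lia)); lra.
    unfold S. rewrite sumd_lsum. replace (INR d) with (INR (length (seq 0 d))) by (rewrite length_seq; auto).
    rewrite <- lsum_const. apply lsum_le. intros j Hj; apply in_seq in Hj. destruct (Hb j ltac:(lia)); lra. }
  assert (HY : Rabs Y <= S * K).
  { unfold Y, S. rewrite sumd_lsum. eapply Rle_trans; [apply lsum_abs|].
    rewrite sumd_lsum, <- lsum_scal_r. apply lsum_le. intros j Hj; apply in_seq in Hj.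
    destruct (Hb j ltac:(lia)).
    pose proof (HK _ (lattice_shift _ _ j Hx)). pose proof (HK _ (lattice_unshift _ _ j Hx)).
    eapply Rle_trans; [apply Rabs_triang|]. rewrite !Rabs_mult, (Rabs_pos_eq (bp j)), (Rabs_pos_eq (bm j)) by lra.
    nra. }
  assert (E : (/ T + S) * w x = Y) by (rewrite HL in Heq; lra).
  assert (E2 : (/ T + S) * Rabs (w x) <= S * K).
  { rewrite <- (Rabs_pos_eq (/ T + S)) by (pose proof (Rinv_0_lt_compat T HT); lra).
    rewrite <- Rabs_mult, E. auto. }
  pose proof (HK x Hx). pose proof (Rinv_0_lt_compat T HT). pose proof (Rabs_pos (w x)).
  set (B := INR d * (2 * be)) in *.
  assert (E4 : (B - S) * Rabs (w x) <= (B - S) * K) by (apply Rmult_le_compat_l; lra).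
  assert (E3 : (/ T + B) * Rabs (w x) <= B * K) by lra.
  apply (Rmult_le_reg_l (/ T + B)). lra.
  replace ((/ T + B) * (B / (/ T + B) * K)) with (B * K * ((/ T + B) * / (/ T + B))) by (unfold Rdiv; ring).
  rewrite Rinv_r by lra. lra.
Qed.

Lemma uniq0 : forall d al be b T w, 0 < T -> 0 < al <= be -> conductivity d al be b ->
  (exists M, forall x, lattice d x -> Rabs (w x) <= M) ->
  (forall x, lattice d x -> / T * w x - Lx d b xi0 w x = 0) ->
  forall x, lattice d x -> w x = 0.
Proof.
  intros d al be b T w HT Hal Hc [M HM] Heq.
  set (B := INR d * (2 * be)).
  assert (HB : 0 <= B) by (unfold B; pose proof (pos_INR d); nra).
  set (k := B / (/ T + B)).
  pose proof (Rinv_0_lt_compat T HT).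
  assert (Hk : 0 <= k < 1).
  { unfold k. split. apply Rdiv_le_0_compat; lra.
    apply (Rmult_lt_reg_r (/ T + B)). lra. unfold Rdiv. rewrite Rmult_assoc, Rinv_l by lra. lra. }
  assert (Hn : forall n x, lattice d x -> Rabs (w x) <= k ^ n * M).
  { induction n; intros x Hx. simpl. rewrite Rmult_1_l. auto.
    eapply Rle_trans. apply (uniq_step d al be b T w x (k ^ n * M)); auto; lra.
    fold B k. simpl. lra. }
  intros x Hx. assert (Rabs (w x) <= 0).
  { eapply (lim_ge_eventually (fun n => k ^ n * M) 0 _ 0).
    replace (Finite 0) with (Rbar_mult (Finite 0) M) by (simpl; f_equal; ring).
    apply is_lim_seq_scal_r. apply is_lim_seq_geom. rewrite Rabs_pos_eq; lra.
    intros; apply Hn; auto. }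
  pose proof (Rabs_pos (w x)). apply Rabs_eq_0. lra.
Qed.

Lemma key_term : forall d a z i t xi u x j, lattice d z -> (i < d)%nat -> lattice d x -> (j < d)%nat ->
  (upd a z i t x (shift x j) * (grad u x j + xi j) - upd a z i t (unshift x j) x * (grad u (unshift x j) j + xi j))
  - (a x (shift x j) * (grad u x j + xi j) - a (unshift x j) x * (grad u (unshift x j) j + xi j))
  = if Nat.eq_dec j i then ((t - a z (shift z i)) * (grad u z i + xi i)) * (delta z x - delta (shift z i) x) else 0.
Proof.
  intros d a z i t xi u x j Hz Hi Hx Hj.
  pose proof (L_s_ne d z Hz i i Hi Hi) as N1.
  unfold upd, delta.
  destruct (list_eq_dec Z.eq_dec x z) as [Exz|Exz].
  - subst x.
    destruct (list_eq_dec Z.eq_dec (unshift z j) z) as [C|_]; [exfalso; exact (L_u_ne d z Hz i j Hi Hj C)|].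
    destruct (list_eq_dec Z.eq_dec (unshift z j) (shift z i)) as [C|_]; [exfalso; exact (L_uz_s d z Hz i j Hi Hj C)|].
    destruct (list_eq_dec Z.eq_dec z z); [|congruence].
    destruct (list_eq_dec Z.eq_dec z (shift z i)) as [C|_]; [congruence|].
    destruct (list_eq_dec Z.eq_dec (shift z j) (shift z i)) as [E|E].
    + pose proof (L_ss d z Hz i j Hi Hj E). subst j. destruct (Nat.eq_dec i i); [|congruence]. ring.
    + destruct (Nat.eq_dec j i); [subst; congruence|]. ring.
  - destruct (list_eq_dec Z.eq_dec x (shift z i)) as [Exs|Exs].
    + subst x.
      destruct (list_eq_dec Z.eq_dec (shift (shift z i) j) z) as [C|_]; [exfalso; exact (L_ss_z d z Hz i j Hi Hj C)|].
      destruct (list_eq_dec Z.eq_dec (unshift (shift z i) j) z) as [E|E].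
      * pose proof (L_us d z Hz i j Hi Hj E). subst j. rewrite unshift_shift.
        destruct (list_eq_dec Z.eq_dec z z); [|congruence].
        destruct (list_eq_dec Z.eq_dec (shift z i) (shift z i)); [|congruence].
        destruct (list_eq_dec Z.eq_dec (shift z i) z); [congruence|].
        destruct (Nat.eq_dec i i); [|congruence]. ring.
      * destruct (list_eq_dec Z.eq_dec (unshift (shift z i) j) (shift z i)) as [C|_]; [exfalso; exact (L_us2 d z Hz i j Hi Hj C)|].
        destruct (list_eq_dec Z.eq_dec (shift z i) z); [congruence|].
        destruct (list_eq_dec Z.eq_dec (shift z i) (shift z i)); [|congruence].
        destruct (Nat.eq_dec j i); [subst; rewrite unshift_shift in E; congruence|]. ring.
    + destruct (list_eq_dec Z.eq_dec (unshift x j) z);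
      destruct (list_eq_dec Z.eq_dec (unshift x j) (shift z i));
      destruct (Nat.eq_dec j i); ring.
Qed.

Lemma key_L : forall d a z i t xi u x, lattice d z -> (i < d)%nat -> lattice d x ->
  Lx d (upd a z i t) xi u x - Lx d a xi u x =
  ((t - a z (shift z i)) * (grad u z i + xi i)) * (delta z x - delta (shift z i) x).
Proof.
  intros. unfold Lx. rewrite !sumd_lsum, <- lsum_minus.
  rewrite (lsum_ext_in _ _ (fun j => if Nat.eq_dec j i then ((t - a z (shift z i)) * (grad u z i + xi i)) * (delta z x - delta (shift z i) x) else 0)).
  apply lsum_ind. apply seq_NoDup. apply in_seq; lia.
  intros j Hj. apply in_seq in Hj. apply key_term with d; auto; lia.
Qed.

Lemma L_lin : forall d b xi u v c g1 g2 x,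
  Lx d b xi0 (fun w => u w - v w + c * (g1 w - g2 w)) x =
  (Lx d b xi u x - Lx d b xi v x) + c * (Lx d b xi0 g1 x - Lx d b xi0 g2 x).
Proof.
  intros. unfold Lx. rewrite !sumd_lsum, <- lsum_minus, <- lsum_minus, <- lsum_scal, <- lsum_plus.
  apply lsum_ext_in. intros j _. unfold grad, xi0. ring.
Qed.

Lemma perturb : forall d al be a T G z i t xi u v F,
  0 < T -> 0 < al <= be -> conductivity d al be a -> lattice d z -> (i < d)%nat ->
  green d T a G ->
  (exists M, forall x, lattice d x -> Rabs (u x) <= M) ->
  (exists M, forall x, lattice d x -> Rabs (v x) <= M) ->
  (forall x, lattice d x -> / T * u x - Lx d (upd a z i t) xi u x = F x) ->
  (forall x, lattice d x -> / T * v x - Lx d a xi v x = F x) ->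
  forall x, lattice d x ->
    u x - v x = - ((t - a z (shift z i)) * (grad u z i + xi i)) * grad (fun w => G w x) z i.
Proof.
  intros d al be a T G z i t xi u v F HT Hal Hc Hz Hi Hg [Mu HMu] [Mv HMv] Hu Hv.
  set (c := (t - a z (shift z i)) * (grad u z i + xi i)).
  pose proof (lattice_shift d z i Hz) as Hzs.
  set (h := fun w => u w - v w + c * (G w (shift z i) - G w z)).
  assert (H0 : forall x, lattice d x -> h x = 0).
  { apply (uniq0 d al be a T h HT Hal Hc).
    - destruct (green_bound d T a G (shift z i) Hg Hzs) as [M1 H1].
      destruct (green_bound d T a G z Hg Hz) as [M2 H2].
      exists (Mu + Mv + Rabs c * (M1 + M2)). intros x Hx. unfold h.
      specialize (HMu x Hx). specialize (HMv x Hx). specialize (H1 x Hx). specialize (H2 x Hx).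
      eapply Rle_trans; [apply Rabs_triang|]. rewrite Rabs_mult.
      pose proof (Rabs_pos c).
      assert (Rabs (G x (shift z i) - G x z) <= M1 + M2).
      { unfold Rminus. eapply Rle_trans; [apply Rabs_triang|]. rewrite Rabs_Ropp. lra. }
      assert (Rabs (u x - v x) <= Mu + Mv).
      { unfold Rminus. eapply Rle_trans; [apply Rabs_triang|]. rewrite Rabs_Ropp. lra. }
      assert (Rabs c * Rabs (G x (shift z i) - G x z) <= Rabs c * (M1 + M2)) by (apply Rmult_le_compat_l; lra).
      lra.
    - intros x Hx. unfold h. rewrite (L_lin d a xi).
      pose proof (green_pt d T a G x (shift z i) Hg Hx Hzs) as G1.
      pose proof (green_pt d T a G x z Hg Hx Hz) as G2.
      pose proof (key_L d a z i t xi u x Hz Hi Hx) as K. fold c in K.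
      specialize (Hu x Hx). specialize (Hv x Hx).
      replace (/ T * (u x - v x + c * (G x (shift z i) - G x z)) -
        (Lx d a xi u x - Lx d a xi v x + c * (Lx d a xi0 (fun w => G w (shift z i)) x - Lx d a xi0 (fun w => G w z) x)))
        with ((/ T * u x - Lx d (upd a z i t) xi u x) + (Lx d (upd a z i t) xi u x - Lx d a xi u x)
               - (/ T * v x - Lx d a xi v x)
               + c * ((/ T * G x (shift z i) - Lx d a xi0 (fun w => G w (shift z i)) x)
                      - (/ T * G x z - Lx d a xi0 (fun w => G w z) x))) by ring.
      rewrite Hu, Hv, K, G1, G2. ring. }
  intros x Hx. specialize (H0 x Hx). unfold h in H0.
  rewrite (green_sym d T a G x (shift z i)), (green_sym d T a G x z) in H0 by auto.
  unfold grad. fold c. lra.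
Qed.

Lemma l2_minus : forall d u v, l2 d u -> l2 d v -> l2 d (fun w => u w - v w).
Proof.
  intros d u v [M1 H1] [M2 H2]. exists (2 * M1 + 2 * M2). intro N.
  specialize (H1 N). specialize (H2 N). rewrite boxsum_lsum in *.
  eapply Rle_trans. apply (lsum_le _ _ (fun w => 2 * u w ^ 2 + 2 * v w ^ 2)).
  intros w _; cbv beta; pose proof (pow2_ge_0 (u w + v w)); simpl in *; nra. rewrite lsum_plus, !lsum_scal. lra.
Qed.

Definition gg (G : pt -> pt -> R) z i :=
  grad (fun w => G w (shift z i)) z i - grad (fun w => G w z) z i.

Lemma g_bound : forall d al be a T G z i, 0 < T -> 0 < al <= be -> conductivity d al be a ->
  green d T a G -> lattice d z -> (i < d)%nat ->
  0 <= gg G z i /\ a z (shift z i) * gg G z i <= 1.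
Proof.
  intros d al be a T G z i HT Hal Hc Hg Hz Hi.
  pose proof (lattice_shift d z i Hz) as Hzs.
  destruct (Hg _ Hzs) as [L1 W1]. destruct (Hg _ Hz) as [L2 W2].
  set (U := fun w => G w (shift z i) - G w z).
  assert (LU : l2 d U) by (apply l2_minus; auto).
  specialize (W1 U LU). specialize (W2 U LU).
  pose proof (is_lim_seq_minus' _ _ _ _ W1 W2) as W.
  assert (Eg : U (shift z i) - U z = gg G z i) by (unfold U, gg, grad; ring).
  rewrite Eg in W.
  pose proof (cond_edge d al be a z i Hc Hz Hi) as [Be _].
  pose proof (Rinv_0_lt_compat T HT).
  assert (Hle : a z (shift z i) * (gg G z i * gg G z i) <= gg G z i).
  { eapply (lim_ge_eventually _ _ _ (Z.to_nat (bnd z) + 1) W).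
    intros N HN. destruct (box_big d z Hz N HN) as [Hin _].
    rewrite !boxsum_lsum, <- lsum_minus.
    set (f := fun w => / T * (U w * U w) + sumd d (fun j => a w (shift w j) * (grad U w j * grad U w j))).
    rewrite (lsum_ext_in _ _ f).
    2:{ intros w _. unfold f.
        match goal with |- (?A1 + ?S1) - (?A2 + ?S2) = _ => transitivity ((A1 - A2) + (S1 - S2)); [ring|] end.
        f_equal. unfold U; ring.
        rewrite !sumd_lsum, <- lsum_minus. apply lsum_ext_in. intros j _. unfold U, grad. ring. }
    assert (Hf : forall w, In w (box d N) -> 0 <= f w).
    { intros w Hw. pose proof (box_lattice _ _ _ Hw) as Lw. unfold f.
      assert (0 <= / T * (U w * U w)) by (apply Rmult_le_pos; nra).
      assert (0 <= sumd d (fun j => a w (shift w j) * (grad U w j * grad U w j))).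
      { rewrite sumd_lsum. apply lsum_nonneg. intros j Hj; apply in_seq in Hj.
        pose proof (cond_edge d al be a w j Hc Lw ltac:(lia)) as [B _]. apply Rmult_le_pos; nra. }
      lra. }
    eapply Rle_trans; [|apply (lsum_ge_term _ f z Hf Hin)].
    unfold f. assert (grad U z i = gg G z i) by (rewrite <- Eg; unfold grad; ring).
    assert (0 <= / T * (U z * U z)) by (apply Rmult_le_pos; nra).
    assert (a z (shift z i) * (grad U z i * grad U z i) <= sumd d (fun j => a z (shift z j) * (grad U z j * grad U z j))).
    { apply (sumd_ge_term d (fun j => a z (shift z j) * (grad U z j * grad U z j))); auto.
      intros k Hk. pose proof (cond_edge d al be a z k Hc Hz Hk) as [B _]. apply Rmult_le_pos; nra. }
    rewrite H0 in H2. lra. }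
  set (g := gg G z i) in *. set (ae := a z (shift z i)) in *.
  assert (0 <= g) by nra. split; auto.
  destruct (Rle_lt_dec (ae * g) 1); auto. nra.
Qed.

Lemma perturb_grad : forall d al be a T G z i t xi u v F,
  0 < T -> 0 < al <= be -> conductivity d al be a -> lattice d z -> (i < d)%nat ->
  green d T a G ->
  (exists M, forall x, lattice d x -> Rabs (u x) <= M) ->
  (exists M, forall x, lattice d x -> Rabs (v x) <= M) ->
  (forall x, lattice d x -> / T * u x - Lx d (upd a z i t) xi u x = F x) ->
  (forall x, lattice d x -> / T * v x - Lx d a xi v x = F x) ->
  (grad u z i + xi i) * (1 + (t - a z (shift z i)) * gg G z i) = grad v z i + xi i.
Proof.
  intros. pose proof (lattice_shift d z i H2) as Hzs.
  pose proof (perturb d al be a T G z i t xi u v F H H0 H1 H2 H3 H4 H5 H6 H7 H8) as P.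
  pose proof (P _ Hzs) as P1. pose proof (P _ H2) as P2.
  unfold gg, grad in *. lra.
Qed.

Lemma ell_upd : forall d al be a z i t, 0 < al <= be -> conductivity d al be a -> lattice d z -> (i < d)%nat ->
  0 < t -> elliptic d (upd a z i t).
Proof.
  intros. exists (Rmin al t), (Rmax be t). split.
  split. apply Rmin_pos; lra. eapply Rle_trans; [apply Rmin_l|]. eapply Rle_trans; [|apply Rmax_l]. lra.
  apply upd_cond; auto.
Qed.

Lemma cond_upd_in : forall d al be a z i s, conductivity d al be a -> lattice d z -> (i < d)%nat ->
  al <= s <= be -> conductivity d al be (upd a z i s).
Proof.
  intros. pose proof (upd_cond d al be a z i s H H0 H1).
  rewrite Rmin_left, Rmax_left in H3 by lra. auto.
Qed.

Lemma rels : forall d al be (PHI : R -> (nat -> R) -> Cond -> pt -> R) (G : R -> Cond -> pt -> pt -> R),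
  0 < al <= be ->
  (forall T xi a, 0 < T -> unit_vec d xi -> elliptic d a -> corrector d T xi a (PHI T xi a)) ->
  (forall T a, 0 < T -> elliptic d a -> green d T a (G T a)) ->
  forall T xi a z i t, 0 < T -> unit_vec d xi -> conductivity d al be a -> lattice d z -> (i < d)%nat -> 0 < t ->
  (forall x, lattice d x -> PHI T xi (upd a z i t) x - PHI T xi a x =
      - ((t - a z (shift z i)) * (grad (PHI T xi (upd a z i t)) z i + xi i)) * grad (fun w => G T a w x) z i)
  /\ (grad (PHI T xi (upd a z i t)) z i + xi i) * (1 + (t - a z (shift z i)) * gg (G T a) z i)
       = grad (PHI T xi a) z i + xi i
  /\ (forall y, lattice d y -> grad (fun w => G T (upd a z i t) w y) z i * (1 + (t - a z (shift z i)) * gg (G T a) z i)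
       = grad (fun w => G T a w y) z i).
Proof.
  intros d al be PHI G Hal HP HG T xi a z i t HT Hxi Hc Hz Hi Ht.
  assert (Ea : elliptic d a) by (exists al, be; auto).
  pose proof (ell_upd d al be a z i t Hal Hc Hz Hi Ht) as Et.
  destruct (HP T xi a HT Hxi Ea) as [Ba Qa].
  destruct (HP T xi _ HT Hxi Et) as [Bt Qt].
  pose proof (HG T a HT Ea) as Ga. pose proof (HG T _ HT Et) as Gt.
  split; [|split].
  - apply (perturb d al be a T (G T a) z i t xi _ _ (fun _ => 0)); auto.
  - apply (perturb_grad d al be a T (G T a) z i t xi _ _ (fun _ => 0)); auto.
  - intros y Hy.
    pose proof (perturb_grad d al be a T (G T a) z i t xi0 (fun w => G T (upd a z i t) w y) (fun w => G T a w y) (delta y)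
      HT Hal Hc Hz Hi Ga (green_bound _ _ _ _ _ Gt Hy) (green_bound _ _ _ _ _ Ga Hy)) as P.
    unfold xi0 in P. rewrite !Rplus_0_r in P. apply P.
    intros x Hx. apply (green_pt d T _ _ x y Gt Hx Hy).
    intros x Hx. apply (green_pt d T _ _ x y Ga Hx Hy).
Qed.

Lemma part1 : forall d al be (PHI : R -> (nat -> R) -> Cond -> pt -> R) (G : R -> Cond -> pt -> pt -> R),
  0 < al <= be ->
  (forall T xi a, 0 < T -> unit_vec d xi -> elliptic d a -> corrector d T xi a (PHI T xi a)) ->
  (forall T a, 0 < T -> elliptic d a -> green d T a (G T a)) ->
  forall T xi a z i x,
      0 < T -> unit_vec d xi -> conductivity d al be a ->
      lattice d z -> (i < d)%nat -> lattice d x ->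
      is_derive (fun s => PHI T xi (upd a z i s) x) (a z (shift z i))
        (- (grad (PHI T xi a) z i + xi i) * grad (fun w => G T a w x) z i).
Proof.
  intros d al be PHI G Hal HP HG T xi a z i x HT Hxi Hc Hz Hi Hx.
  assert (Ea : elliptic d a) by (exists al, be; auto).
  pose proof (cond_edge d al be a z i Hc Hz Hi) as [Be _].
  set (ae := a z (shift z i)) in *.
  destruct (g_bound d al be a T (G T a) z i HT Hal Hc (HG T a HT Ea) Hz Hi) as [g0 g1].
  fold ae in g0, g1.
  set (g := gg (G T a) z i) in *.
  set (P := grad (PHI T xi a) z i + xi i).
  set (Q := grad (fun w => G T a w x) z i).
  apply is_derive_Reals. intros eps Heps.
  assert (Hd : 0 < Rmin (ae / 2) (eps / (2 * (Rabs P * Rabs Q * g + 1)))).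
  { apply Rmin_pos. lra. apply Rdiv_lt_0_compat; auto.
    pose proof (Rabs_pos P); pose proof (Rabs_pos Q). assert (0 <= Rabs P * Rabs Q * g) by (repeat apply Rmult_le_pos; lra). lra. }
  exists (mkposreal _ Hd). intros h Hh0 Hh. simpl in Hh.
  assert (Hh1 : Rabs h < ae / 2) by (eapply Rlt_le_trans; [exact Hh|apply Rmin_l]).
  assert (Hh2 : Rabs h < eps / (2 * (Rabs P * Rabs Q * g + 1))) by (eapply Rlt_le_trans; [exact Hh|apply Rmin_r]).
  assert (Ht : 0 < ae + h) by (destruct (Rabs_def2 _ _ Hh1); lra).
  destruct (rels d al be PHI G Hal HP HG T xi a z i (ae + h) HT Hxi Hc Hz Hi Ht) as [R1 [R2 _]].
  fold ae g P in R2. specialize (R1 x Hx). fold ae Q in R1.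
  assert (Eu : upd a z i ae = a) by (apply (upd_id d al be a z i Hc Hz Hi)). rewrite Eu.
  set (X := grad (PHI T xi (upd a z i (ae + h))) z i + xi i) in *.
  replace (ae + h - ae) with h in * by ring.
  rewrite R1.
  assert (E : - (h * X) * Q / h - - P * Q = X * h * g * Q).
  { rewrite <- R2. field. auto. }
  rewrite E.
  assert (HD : 1 / 2 <= 1 + h * g).
  { assert (Rabs (h * g) <= 1 / 2).
    { rewrite Rabs_mult, (Rabs_pos_eq g) by lra.
      assert (Rabs h * g <= ae / 2 * g) by (apply Rmult_le_compat_r; lra).
      assert (ae / 2 * g <= 1 / 2) by (replace (ae / 2 * g) with (ae * g / 2) by field; lra). lra. }
    pose proof (Rle_abs (- (h * g))) as HH. rewrite Rabs_Ropp in HH. lra. }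
  assert (HX : Rabs X <= 2 * Rabs P).
  { rewrite <- R2. rewrite Rabs_mult, (Rabs_pos_eq (1 + h * g)) by lra.
    pose proof (Rabs_pos X). nra. }
  set (K := Rabs P * Rabs Q * g) in *.
  assert (HK : 0 <= K) by (unfold K; pose proof (Rabs_pos P); pose proof (Rabs_pos Q); repeat apply Rmult_le_pos; lra).
  rewrite !Rabs_mult, (Rabs_pos_eq g) by lra.
  assert (Rabs X * Rabs h * g * Rabs Q <= 2 * K * Rabs h).
  { unfold K. pose proof (Rabs_pos h). pose proof (Rabs_pos Q).
    assert (0 <= Rabs h * g * Rabs Q) by (repeat apply Rmult_le_pos; lra).
    replace (Rabs X * Rabs h * g * Rabs Q) with (Rabs X * (Rabs h * g * Rabs Q)) by ring.
    replace (2 * (Rabs P * Rabs Q * g) * Rabs h) with (2 * Rabs P * (Rabs h * g * Rabs Q)) by ring.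
    apply Rmult_le_compat_r; lra. }
  assert (2 * K * Rabs h <= 2 * (K + 1) * Rabs h) by (pose proof (Rabs_pos h); nra).
  assert (2 * (K + 1) * Rabs h < eps).
  { apply (Rmult_lt_compat_l (2 * (K + 1))) in Hh2; [|lra].
    replace (2 * (K + 1) * (eps / (2 * (K + 1)))) with eps in Hh2 by (field; lra). lra. }
  lra.
Qed.


Lemma Dbound : forall al be ae s g, 0 < al <= be -> al <= ae <= be -> al <= s <= be -> 0 <= g -> ae * g <= 1 ->
  al <= be * (1 + (s - ae) * g) /\ 0 < 1 + (s - ae) * g.
Proof.
  intros. destruct (Rle_lt_dec ae s).
  - assert (0 <= (s - ae) * g) by (apply Rmult_le_pos; lra). nra.
  - assert ((s - ae) * (ae * g) >= (s - ae)) by nra.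
    assert (ae * (1 + (s - ae) * g) >= s) by nra.
    assert (0 < 1 + (s - ae) * g) by nra. split; nra.
Qed.

Lemma scale_bound : forall al be D X P, 0 < al -> al <= be * D -> 0 < D -> X * D = P ->
  al * Rabs X <= be * Rabs P.
Proof.
  intros. rewrite <- H2, Rabs_mult, (Rabs_pos_eq D) by lra. pose proof (Rabs_pos X). nra.
Qed.

Lemma part_bounds : forall d al be (PHI : R -> (nat -> R) -> Cond -> pt -> R) (G : R -> Cond -> pt -> pt -> R),
  0 < al <= be ->
  (forall T xi a, 0 < T -> unit_vec d xi -> elliptic d a -> corrector d T xi a (PHI T xi a)) ->
  (forall T a, 0 < T -> elliptic d a -> green d T a (G T a)) ->
  forall T xi a z i s, 0 < T -> unit_vec d xi -> conductivity d al be a -> lattice d z -> (i < d)%nat ->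
  al <= s <= be ->
  al * Rabs (grad (PHI T xi (upd a z i s)) z i + xi i) <= be * Rabs (grad (PHI T xi a) z i + xi i)
  /\ (forall y, lattice d y -> al * Rabs (grad (fun w => G T (upd a z i s) w y) z i) <= be * Rabs (grad (fun w => G T a w y) z i))
  /\ (forall x, lattice d x -> Rabs (PHI T xi (upd a z i s) x) <= Rabs (PHI T xi a x)
        + (be - al) * Rabs (grad (PHI T xi (upd a z i s)) z i + xi i) * Rabs (grad (fun w => G T a w x) z i)).
Proof.
  intros d al be PHI G Hal HP HG T xi a z i s HT Hxi Hc Hz Hi Hs.
  assert (Ea : elliptic d a) by (exists al, be; auto).
  pose proof (cond_edge d al be a z i Hc Hz Hi) as [Be _].
  destruct (g_bound d al be a T (G T a) z i HT Hal Hc (HG T a HT Ea) Hz Hi) as [g0 g1].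
  destruct (Dbound al be (a z (shift z i)) s (gg (G T a) z i) Hal Be Hs g0 g1) as [D1 D2].
  destruct (rels d al be PHI G Hal HP HG T xi a z i s HT Hxi Hc Hz Hi ltac:(lra)) as [R1 [R2 R3]].
  split; [|split].
  - eapply scale_bound; eauto. lra.
  - intros y Hy. eapply scale_bound; eauto. lra.
  - intros x Hx. specialize (R1 x Hx).
    set (u := PHI T xi (upd a z i s) x) in *. set (v := PHI T xi a x) in *.
    replace u with (v + - ((s - a z (shift z i)) * (grad (PHI T xi (upd a z i s)) z i + xi i)) * grad (fun w => G T a w x) z i) by lra.
    eapply Rle_trans; [apply Rabs_triang|]. apply Rplus_le_compat_l.
    rewrite Rabs_mult, Rabs_Ropp, Rabs_mult.
    assert (Rabs (s - a z (shift z i)) <= be - al) by (apply Rabs_le; lra).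
    pose proof (Rabs_pos (grad (PHI T xi (upd a z i s)) z i + xi i)).
    pose proof (Rabs_pos (grad (fun w => G T a w x) z i)).
    pose proof (Rabs_pos (s - a z (shift z i))).
    apply Rmult_le_compat_r; auto. apply Rmult_le_compat_r; auto.
Qed.

Lemma xi_bound : forall d xi i, unit_vec d xi -> (i < d)%nat -> Rabs (xi i) <= 1.
Proof.
  intros d xi i H Hi. unfold unit_vec in H.
  pose proof (sumd_ge_term d (fun k => xi k ^ 2) i (fun k _ => pow2_ge_0 (xi k)) Hi). rewrite H in H0.
  simpl in H0. destruct (Rcase_abs (xi i)); [rewrite Rabs_left|rewrite Rabs_right]; nra.
Qed.

Lemma sum_pow : forall n u v, 0 <= u -> 0 <= v -> (u + v) ^ n <= 2 ^ n * (u ^ n + v ^ n).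
Proof.
  intros n u v Hu Hv. destruct (Rle_lt_dec u v).
  - apply Rle_trans with ((2 * v) ^ n). apply pow_incr; lra.
    rewrite Rpow_mult_distr. pose proof (pow_le u n Hu). pose proof (pow_le 2 n ltac:(lra)). nra.
  - apply Rle_trans with ((2 * u) ^ n). apply pow_incr; lra.
    rewrite Rpow_mult_distr. pose proof (pow_le v n Hv). pose proof (pow_le 2 n ltac:(lra)). nra.
Qed.

Lemma arith2 : forall n r K A p q X Y Ph, 0 <= r -> 0 <= K -> 0 <= A -> 0 <= p -> 0 <= q ->
  0 <= X <= r * p -> 0 <= Y <= r * q -> 0 <= Ph <= A + K * p * q ->
  INR (n + 1) * (X * Y) * Ph ^ n <= (INR (n + 1) * r ^ 2 * 2 ^ n * (1 + K ^ n)) *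
     (A ^ n * p * q + p ^ (n + 1) * q ^ (n + 1)).
Proof.
  intros n r K A p q X Y Ph Hr HK HA Hp Hq HX HY HPh.
  pose proof (pos_INR (n + 1)) as Hn.
  assert (H1 : Ph ^ n <= 2 ^ n * (A ^ n + (K * p * q) ^ n)).
  { eapply Rle_trans. apply pow_incr. exact HPh. apply sum_pow; auto. repeat apply Rmult_le_pos; auto. }
  assert (H2 : X * Y <= r ^ 2 * (p * q)).
  { simpl. assert (0 <= r * p) by nra. assert (X * Y <= r * p * Y) by (apply Rmult_le_compat_r; lra).
    assert (r * p * Y <= r * p * (r * q)) by (apply Rmult_le_compat_l; lra). nra. }
  assert (E2 : (K * p * q) ^ n * (p * q) = K ^ n * (p ^ (n + 1) * q ^ (n + 1))).
  { rewrite !Rpow_mult_distr, !pow_add. simpl. ring. }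
  pose proof (pow_le A n HA). pose proof (pow_le K n HK). pose proof (pow_le 2 n ltac:(lra)).
  pose proof (pow_le (K * p * q) n ltac:(repeat apply Rmult_le_pos; auto)).
  pose proof (pow_le Ph n ltac:(lra)).
  assert (0 <= p ^ (n + 1) * q ^ (n + 1)) by (apply Rmult_le_pos; apply pow_le; auto).
  assert (0 <= r ^ 2) by (apply pow_le; auto).
  set (E1 := A ^ n * p * q). set (F2 := p ^ (n + 1) * q ^ (n + 1)) in *.
  assert (0 <= E1) by (unfold E1; repeat apply Rmult_le_pos; auto).
  assert (S1 : X * Y * Ph ^ n <= r ^ 2 * (p * q) * (2 ^ n * (A ^ n + (K * p * q) ^ n))).
  { apply Rmult_le_compat; auto. apply Rmult_le_pos; lra. }
  assert (S2 : r ^ 2 * (p * q) * (2 ^ n * (A ^ n + (K * p * q) ^ n)) = r ^ 2 * 2 ^ n * (E1 + K ^ n * F2)).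
  { unfold E1. rewrite <- E2. ring. }
  assert (S3 : E1 + K ^ n * F2 <= (1 + K ^ n) * (E1 + F2)) by nra.
  assert (S4 : 0 <= r ^ 2 * 2 ^ n) by (apply Rmult_le_pos; auto).
  assert (S5 : r ^ 2 * 2 ^ n * (E1 + K ^ n * F2) <= r ^ 2 * 2 ^ n * ((1 + K ^ n) * (E1 + F2))) by (apply Rmult_le_compat_l; auto).
  replace (INR (n + 1) * (X * Y) * Ph ^ n) with (INR (n + 1) * (X * Y * Ph ^ n)) by ring.
  replace (INR (n + 1) * r ^ 2 * 2 ^ n * (1 + K ^ n) * (E1 + F2)) with (INR (n + 1) * (r ^ 2 * 2 ^ n * ((1 + K ^ n) * (E1 + F2)))) by ring.
  apply Rmult_le_compat_l; auto. lra.
Qed.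

Lemma div_bound : forall al be X P, 0 < al -> al * X <= be * P -> X <= be / al * P.
Proof.
  intros. apply (Rmult_le_reg_l al); auto. replace (al * (be / al * P)) with (be * P) by (field; lra). auto.
Qed.

Theorem lemma2p4 :
  forall (d : nat), (2 <= d)%nat ->
  forall alpha beta : R, 0 < alpha <= beta ->
  forall (PHI : R -> (nat -> R) -> Cond -> pt -> R)
         (G : R -> Cond -> pt -> pt -> R),
  (forall T xi a, 0 < T -> unit_vec d xi -> elliptic d a ->
      corrector d T xi a (PHI T xi a)) ->
  (forall T a, 0 < T -> elliptic d a -> green d T a (G T a)) ->
  (* derivative formula *)
  (forall T xi a z i x,
      0 < T -> unit_vec d xi -> conductivity d alpha beta a ->
      lattice d z -> (i < d)%nat -> lattice d x ->
      is_derive (fun s => PHI T xi (upd a z i s) x) (a z (shift z i))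
        (- (grad (PHI T xi a) z i + xi i) * grad (fun w => G T a w x) z i))
  /\
  (* estimate on the derivative of phi_T^(n+1), constant depending on n, d, alpha, beta *)
  (forall n : nat, exists C, 0 < C /\
    forall T xi a z i x,
      0 < T -> unit_vec d xi -> conductivity d alpha beta a ->
      lattice d z -> (i < d)%nat -> lattice d x ->
      forall s, alpha <= s <= beta ->
        Rabs (Derive (fun t => (PHI T xi (upd a z i t) x) ^ (n + 1)) s)
        <= C * (Rabs (PHI T xi a x) ^ n * (Rabs (grad (PHI T xi a) z i) + 1)
                  * Rabs (grad (fun w => G T a w x) z i)
                + (Rabs (grad (PHI T xi a) z i) + 1) ^ (n + 1)
                  * Rabs (grad (fun w => G T a w x) z i) ^ (n + 1)))
  /\
  (* sup over a(e) of |nabla_i phi_T(z)| *)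
  (exists C, 0 < C /\
    forall T xi a z i,
      0 < T -> unit_vec d xi -> conductivity d alpha beta a ->
      lattice d z -> (i < d)%nat ->
      forall s, alpha <= s <= beta ->
        Rabs (grad (PHI T xi (upd a z i s)) z i)
        <= C * (Rabs (grad (PHI T xi a) z i) + 1)).
Proof.
  intros d Hd al be Hal PHI G HP HG.
  assert (Hr : 0 < be / al) by (apply Rdiv_lt_0_compat; lra).
  split; [|split].
  - intros. eapply part1; eauto.
  - intro n. set (r := be / al) in *. set (K := (be - al) * r).
    assert (HK : 0 <= K) by (unfold K; apply Rmult_le_pos; lra).
    exists (INR (n + 1) * r ^ 2 * 2 ^ n * (1 + K ^ n)). split.
    { pose proof (lt_0_INR (n + 1) ltac:(lia)). pose proof (pow_lt r 2 Hr). pose proof (pow_lt 2 n ltac:(lra)).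
      pose proof (pow_le K n HK). assert (0 < / al) by (apply Rinv_0_lt_compat; lra). repeat apply Rmult_lt_0_compat; lra. }
    intros T xi a z i x HT Hxi Hc Hz Hi Hx s Hs.
    pose proof (cond_upd_in d al be a z i s Hc Hz Hi Hs) as Hc'.
    pose proof (part1 d al be PHI G Hal HP HG T xi (upd a z i s) z i x HT Hxi Hc' Hz Hi Hx) as D1.
    rewrite upd_at in D1.
    apply (is_derive_ext _ (fun t => PHI T xi (upd a z i t) x)) in D1.
    2:{ intro t. rewrite upd_upd. auto. }
    apply is_derive_pow with (n := (n + 1)%nat) in D1.
    rewrite (is_derive_unique _ _ _ D1). replace (Init.Nat.pred (n + 1)) with n by lia. cbv beta.
    destruct (part_bounds d al be PHI G Hal HP HG T xi a z i s HT Hxi Hc Hz Hi Hs) as [B1 [B2 B3]].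
    specialize (B2 x Hx). specialize (B3 x Hx).
    pose proof (xi_bound d xi i Hxi Hi) as Hxi1.
    set (X := grad (PHI T xi (upd a z i s)) z i + xi i) in *.
    set (Y := grad (fun w => G T (upd a z i s) w x) z i) in *.
    set (Q := grad (fun w => G T a w x) z i) in *.
    set (P0 := grad (PHI T xi a) z i) in *.
    rewrite !Rabs_mult, Rabs_Ropp, <- RPow_abs, (Rabs_pos_eq (INR (n + 1))) by apply pos_INR.

    assert (HP0 : Rabs (P0 + xi i) <= Rabs P0 + 1) by (eapply Rle_trans; [apply Rabs_triang|lra]).
    assert (HX : Rabs X <= r * (Rabs P0 + 1)).
    { pose proof (div_bound al be _ _ ltac:(lra) B1). assert (be / al * Rabs (P0 + xi i) <= r * (Rabs P0 + 1)) by (unfold r; apply Rmult_le_compat_l; [apply Rlt_le, Rdiv_lt_0_compat; lra | exact HP0]). lra. }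
    assert (HY : Rabs Y <= r * Rabs Q) by (apply div_bound; [lra|exact B2]).
    pose proof (Rabs_pos X). pose proof (Rabs_pos Y). pose proof (Rabs_pos Q). pose proof (Rabs_pos P0).
    pose proof (Rabs_pos (PHI T xi (upd a z i s) x)).
    apply arith2; try lra; try apply Rabs_pos.
    split; auto. eapply Rle_trans; [exact B3|]. apply Rplus_le_compat_l.
    unfold K. replace ((be - al) * r * (Rabs P0 + 1) * Rabs Q) with ((be - al) * (r * (Rabs P0 + 1)) * Rabs Q) by ring.
    apply Rmult_le_compat_r; auto. apply Rmult_le_compat_l; lra.
  - exists (be / al + 1). split; [lra|].
    intros T xi a z i HT Hxi Hc Hz Hi s Hs.
    destruct (part_bounds d al be PHI G Hal HP HG T xi a z i s HT Hxi Hc Hz Hi Hs) as [B1 _].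
    pose proof (xi_bound d xi i Hxi Hi) as Hxi1.
    set (X := grad (PHI T xi (upd a z i s)) z i + xi i) in *.
    set (P0 := grad (PHI T xi a) z i) in *.
    assert (HP0 : Rabs (P0 + xi i) <= Rabs P0 + 1) by (eapply Rle_trans; [apply Rabs_triang|lra]).
    pose proof (div_bound al be _ _ ltac:(lra) B1).
    assert (be / al * Rabs (P0 + xi i) <= be / al * (Rabs P0 + 1)) by (apply Rmult_le_compat_l; lra).
    replace (grad (PHI T xi (upd a z i s)) z i) with (X - xi i) by (unfold X; ring).
    assert (Rabs (X - xi i) <= Rabs X + 1).
    { unfold Rminus. eapply Rle_trans; [apply Rabs_triang|]. rewrite Rabs_Ropp. lra. }
    pose proof (Rabs_pos P0). nra.
Qed.
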